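(* Let $N\ge 2$. For every $\mathbf w\in W_N$, $$\|\mathbf w\|^2\le\binom{2N}{N}-2,$$ with equality if and only if $\mathbf w(x)=(x+\zeta)^N$ for some $N$-th root of unity $\zeta$.
   Context: Let $N\ge 2$ be an integer and $\mathbb T=\{z\in\mathbb C:|z|=1\}$. For $\mathbf a=(a_1,\dots,a_{N-1})\in\mathbb R^{N-1}$ define $\mathbf c=(c_1,\dots,c_{N-1})\in\mathbb C^{N-1}$ by $c_j=\frac{\sqrt2}{2}(a_j+i\,a_{N-j})$ for $1\le j<N/2$, $c_{N/2}=a_{N/2}$ (only when $N$ is even), and $c_j=\frac{\sqrt2}{2}(a_{N-j}-i\,a_j)$ for $N/2<j\le N-1$ (so $c_{N-j}=\overline{c_j}$ and $\|\mathbf c\|=\|\mathbf a\|$). Associate to $\mathbf a$ the monic polynomial $\mathbf a(x)=x^N+\sum_{n=1}^{N-1}c_nx^{N-n}+1$. Define $W_N=\{\mathbf a\in\mathbb R^{N-1}:\text{all roots of }\mathbf a(x)\text{ lie in }\mathbb T\}$. $\|\cdot\|$ is the Euclidean norm on $\mathbb R^{N-1}$. *)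

(* Defs.v *)
From HB Require Import structures.
From mathcomp Require Import all_boot all_order all_algebra.
From mathcomp Require Import reals.
From mathcomp Require Import complex.
Set Implicit Arguments. Unset Strict Implicit. Unset Printing Implicit Defensive.
Import Order.TTheory GRing.Theory Num.Theory.
Local Open Scope ring_scope.

Section Defs.
Variable R : realType.

(* a_j for 1 <= j <= n, from a : 'rV_n (index j is stored at ordinal j-1); 0 otherwise *)
Definition acoord (n : nat) (a : 'rV[R]_n) (j : nat) : R :=
  if j is k.+1 then oapp (fun i : 'I_n => a 0 i) 0 (insub k) else 0.

Definition ccoef (N : nat) (a : 'rV[R]_N.-1) (j : nat) : R[i] :=
  let s := Num.sqrt 2 / 2 in
  if (j.*2 < N)%N then
    ((s * acoord a j) +i* (s * acoord a (N - j)))%C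
  else if j.*2 == N then
    ((acoord a j) +i* 0)%C
  else ((s * acoord a (N - j)) +i* (- (s * acoord a j)))%C.

Definition apoly (N : nat) (a : 'rV[R]_N.-1) : {poly R[i]} :=
  'X^N + \sum_(1 <= n < N) (ccoef a n)%:P * 'X^(N - n) + 1.

Definition inW (N : nat) (a : 'rV[R]_N.-1) : Prop :=
  forall z : R[i], root (apoly a) z -> `|z| = 1.

Definition sqnorm (n : nat) (a : 'rV[R]_n) : R := \sum_(i < n) a 0 i ^+ 2.

End Defs.

(* Main.v *)
Require Import Defs.
From HB Require Import structures.
From mathcomp Require Import all_boot all_order all_algebra.
From mathcomp Require Import reals.
From mathcomp Require Import complex.
From mathcomp Require Import zify ring lra.
Import Order.TTheory GRing.Theory Num.Theory.
Local Open Scope ring_scope.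

Section Aux.
Context {R : realType}.


Lemma apoly_tail_coef (N : nat) (w : 'rV[R]_N.-1) j :
  (\sum_(1 <= n < N) (ccoef w n)%:P * 'X^(N - n) + 1 : {poly R[i]})`_j =
  \sum_(1 <= n < N) ccoef w n * (j == (N - n)%N)%:R + (j == 0%N)%:R.
Proof.
rewrite coefD coef_sum coefC; congr (_ + _); last by case: (j == 0%N).
by apply: eq_bigr => n _; rewrite coefCM coefXn.
Qed.

Lemma apoly_split (N : nat) (w : 'rV[R]_N.-1) :
  apoly w = 'X^N + (\sum_(1 <= n < N) (ccoef w n)%:P * 'X^(N - n) + 1).
Proof. by rewrite /apoly addrA. Qed.

Lemma apoly_tail_size (N : nat) (w : 'rV[R]_N.-1) : (0 < N)%N ->
  (size ((\sum_(1 <= n < N) (ccoef w n)%:P * 'X^(N - n) + 1)%R : {poly R[i]}) <= N)%N.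
Proof.
move=> N0; apply/leq_sizeP => j hj; rewrite apoly_tail_coef.
rewrite big1_seq ?add0r; last first.
  move=> n /andP[_]; rewrite mem_index_iota => /andP[n1 nN].
  suff -> : (j == (N - n)%N) = false by rewrite mulr0.
  by apply/negbTE; rewrite neq_ltn; apply/orP; right; apply: (leq_trans _ hj); rewrite ltn_subrL n1 N0.
by case: j hj => [|j] hj //; exfalso; lia.
Qed.

Lemma apoly_size (N : nat) (w : 'rV[R]_N.-1) : (0 < N)%N -> size (apoly w) = N.+1.
Proof.
move=> N0; rewrite apoly_split size_addl size_polyXn //.
by rewrite ltnS apoly_tail_size.
Qed.

Lemma apoly_lead (N : nat) (w : 'rV[R]_N.-1) : (0 < N)%N -> lead_coef (apoly w) = 1.
Proof.
move=> N0; rewrite apoly_split lead_coefDl ?lead_coefXn //.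
by rewrite size_polyXn ltnS apoly_tail_size.
Qed.

Lemma apoly_coef (N : nat) (w : 'rV[R]_N.-1) n : (1 <= n < N)%N ->
  (apoly w)`_(N - n) = ccoef w n.
Proof.
move=> /andP[n1 nN]; rewrite apoly_split coefD coefXn apoly_tail_coef.
have -> : (N - n == N)%N = false by apply/negbTE; rewrite neq_ltn ltn_subrL n1 (leq_trans _ nN).
have -> : (N - n == 0)%N = false by rewrite subn_eq0 leqNgt nN.
rewrite add0r addr0 (bigD1_seq n) ?iota_uniq ?mem_index_iota ?n1 //= eqxx mulr1.
rewrite big1_seq ?addr0 // => m /andP[hm hmr] /=.
suff -> : (N - n == N - m)%N = false by rewrite mulr0.
apply/negbTE; apply: contra hm => /eqP h; apply/eqP.
move: h; rewrite mem_index_iota in hmr; lia.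
Qed.

Lemma apoly_coef0 (N : nat) (w : 'rV[R]_N.-1) : (0 < N)%N -> (apoly w)`_0 = 1.
Proof.
move=> N0; rewrite apoly_split coefD coefXn apoly_tail_coef eqxx.
rewrite big1_seq ?add0r //; last first.
  move=> n /andP[_]; rewrite mem_index_iota => /andP[n1 nN].
  by rewrite eq_sym subn_eq0 leqNgt nN mulr0.
have -> : (0 == N)%N = false by apply/negbTE; rewrite eq_sym -lt0n.
by rewrite add0r.
Qed.

Lemma sqrt2_sq : (Num.sqrt 2 / 2 : R) ^+ 2 = 1 / 2.
Proof. by rewrite expr_div_n sqr_sqrtr ?ler0n //; field. Qed.

Lemma ccoef_norm (N : nat) (w : 'rV[R]_N.-1) n :
  `|ccoef w n| ^+ 2 = ((acoord w n ^+ 2 + acoord w (N - n) ^+ 2) / 2)%:C%C.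
Proof.
rewrite normc_def.
rewrite -rmorphXn sqr_sqrtr ?addr_ge0 ?sqr_ge0 //; congr (_%:C%C).
rewrite /ccoef; case: ifP => h1 /=.
  by rewrite !exprMn sqr_sqrtr ?ler0n //; field.
case: ifP => h2 /=.
  have -> : (N - n = n)%N by move/eqP: h2; lia.
  by rewrite expr0n /= addr0; field.
by rewrite sqrrN !exprMn sqr_sqrtr ?ler0n //; field.
Qed.

Lemma sqnorm_sum (N : nat) (w : 'rV[R]_N.-1) :
  sqnorm w = \sum_(1 <= n < N) (acoord w n ^+ 2 + acoord w (N - n) ^+ 2) / 2.
Proof.
have E : sqnorm w = \sum_(1 <= n < N) acoord w n ^+ 2.
  rewrite big_add1 /= big_mkord /sqnorm; apply: eq_bigr => i _.
  by rewrite /acoord valK.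
have E2 : \sum_(1 <= n < N) acoord w (N - n) ^+ 2 = \sum_(1 <= n < N) acoord w n ^+ 2.
  rewrite [RHS]big_nat_rev; apply: eq_bigr => i _; congr (acoord w _ ^+ 2); lia.
by rewrite -mulr_suml big_split /= E2 -E mulrDl -splitr.
Qed.

Lemma binom_sq_sum (N : nat) : (0 < N)%N ->
  \sum_(1 <= n < N) ('C(N, n)%:R : R) ^+ 2 = ('C(N.*2, N))%:R - 2.
Proof.
move=> N0.
have V : (\sum_(0 <= j < N.+1) 'C(N,j) ^ 2 = 'C(N.*2, N))%N.
  rewrite -addnn -binomial.Vandermonde big_mkord; apply: eq_bigr => j _.
  rewrite bin_sub; last by rewrite -ltnS.
  by rewrite expnS expn1.
rewrite (big_cat_nat (n:=1)) // (big_cat_nat (m:=1) (n:=N)) //= in V.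
rewrite !big_nat1 bin0 binn in V.
rewrite -V !natrD natr_sum exp1n.
set S := \sum_(1 <= i < N) _.
have -> : \sum_(1 <= i < N) (('C(N, i) ^ 2)%:R : R) = S by apply: eq_bigr => i _; rewrite natrX.
ring.
Qed.

Lemma coef_bound (rs : seq R[i]) n : (forall z, z \in rs -> `|z| = 1) -> (n <= size rs)%N ->
  `|(\prod_(z <- rs) ('X - z%:P))`_(size rs - n)| <= ('C(size rs, n))%:R.
Proof.
move=> h1 hn; rewrite coef_prod_XsubC ?leq_subr // subKn //.
rewrite normrM normrX normrN1 expr1n mul1r.
apply: le_trans (ler_norm_sum _ _ _) _.
rewrite (eq_bigr (fun _ => 1)); last first.
  move=> I _; rewrite normr_prod big1 // => i _; apply: h1; exact: mem_nth.
rewrite sumr_const.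
have -> : #|(fun I : {set 'I_(size rs)} => #|I| == n)| = 'C(size rs, n).
  rewrite -[in RHS](card_ord (size rs)) -card_draws; apply: eq_card => I; by rewrite inE.
by [].
Qed.

Lemma coef_const (rs : seq R[i]) u n : (forall z, z \in rs -> z = u) -> (n <= size rs)%N ->
  (\prod_(z <- rs) ('X - z%:P))`_(size rs - n) = (-1) ^+ n * (u ^+ n *+ 'C(size rs, n)).
Proof.
move=> h1 hn; rewrite coef_prod_XsubC ?leq_subr // subKn //; congr (_ * _).
rewrite (eq_bigr (fun _ => u ^+ n)); last first.
  move=> I /eqP hI; rewrite (eq_bigr (fun _ => u)); first by rewrite prodr_const hI.
  move=> i _; apply: h1; exact: mem_nth.
rewrite sumr_const.
have -> : #|(fun I : {set 'I_(size rs)} => #|I| == n)| = 'C(size rs, n).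
  rewrite -[in RHS](card_ord (size rs)) -card_draws; apply: eq_card => I; by rewrite inE.
by [].
Qed.

Lemma sum_const_seq (T : Type) (rs : seq T) (c : R[i]) : \sum_(z <- rs) c = c *+ size rs.
Proof. by elim: rs => [|a rs IH]; rewrite ?big_nil ?big_cons ?IH ?mulrS. Qed.

Lemma all_eq_of_sum (rs : seq R[i]) : (forall z, z \in rs -> `|z| = 1) ->
  (0 < size rs)%N -> `|\sum_(z <- rs) z| = (size rs)%:R ->
  forall z, z \in rs -> z = (\sum_(z <- rs) z) / (size rs)%:R.
Proof.
move=> h1 s0 hS.
set S := \sum_(z <- rs) z; set m := size rs; set u := S / m%:R.
have m0 : (m%:R : R[i]) != 0 by rewrite pnatr_eq0 -lt0n.
have hu : u * u^* = 1.
  by rewrite -normCK /u normrM normfV hS normr_nat mulfV // expr1n.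
have hSu : S = u * m%:R by rewrite /u mulfVK.
rewrite -/u; clearbody u.
have E : \sum_(z <- rs) `|z - u| ^+ 2 = 0.
  have -> : \sum_(z <- rs) `|z - u| ^+ 2 = \sum_(z <- rs) (2 - (z * u^* + u * z^*)).
    apply: eq_big_seq => z hz; rewrite normCK rmorphB /=.
    have : z * z^* = 1 by rewrite -normCK h1 // expr1n.
    move=> hz1; transitivity (z * z^* + u * u^* - (z * u^* + u * z^*)); first ring.
    by rewrite hz1 hu.
  rewrite sumrB sum_const_seq big_split /= -mulr_suml -mulr_sumr -rmorph_sum /=.
  rewrite -/S hSu rmorphM /= conjC_nat.
  transitivity ((2 - (u * u^* + u * u^*)) *+ m); last by rewrite hu subrr mul0rn.
  rewrite -mulr_natr -[in RHS]mulr_natr; ring.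
move: E => /eqP; rewrite psumr_eq0; last by move=> z _; rewrite exprn_ge0.
move=> /allP hall z hz.
move: (hall z hz) => /=; rewrite expf_eq0 /= normr_eq0 subr_eq0 => /eqP.
done.
Qed.

Lemma prod_const_seq (T : Type) (rs : seq T) (c : {poly R[i]}) : \prod_(z <- rs) c = c ^+ size rs.
Proof. by elim: rs => [|a rs IH]; rewrite ?big_nil ?big_cons ?IH ?exprS. Qed.
End Aux.

Theorem mainTheorem6 (R : realType) (N : nat) (hN : (2 <= N)%N)
    (w : 'rV[R]_N.-1) (hw : inW w) :
  sqnorm w <= ('C(N.*2, N))%:R - 2 /\
  (sqnorm w = ('C(N.*2, N))%:R - 2 <->
     exists zeta : R[i], zeta ^+ N = 1 /\ apoly w = ('X + zeta%:P) ^+ N).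
Proof.
have N0 : (0 < N)%N by apply: leq_trans hN.
have lp := @apoly_lead R N w N0.
have sp := @apoly_size R N w N0.
have [rs hrs] := closed_field_poly_normal (apoly w).
rewrite lp scale1r in hrs.
have srs : size rs = N.
  by move: sp; rewrite hrs size_prod_XsubC => -[].
have hr : forall z, z \in rs -> `|z| = 1.
  by move=> z hz; apply: hw; rewrite hrs root_prod_XsubC.
have Hc : forall n, (1 <= n < N)%N -> ccoef w n = (\prod_(z <- rs) ('X - z%:P))`_(size rs - n).
  by move=> n hn; rewrite -hrs srs apoly_coef.
set f := fun n => (acoord w n ^+ 2 + acoord w (N - n) ^+ 2) / 2.
set g := fun n => ('C(N, n)%:R : R) ^+ 2.
have Hf : forall n, (f n)%:C%C = `|ccoef w n| ^+ 2 by move=> n; rewrite ccoef_norm.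
have Hg : forall n, (g n)%:C%C = ('C(N, n)%:R : R[i]) ^+ 2 by move=> n; rewrite rmorphXn rmorph_nat.
have Hfg : forall n, (1 <= n < N)%N -> f n <= g n.
  move=> n hn; rewrite -lecR Hf Hg lerXn2r ?nnegrE ?ler0n //.
  rewrite Hc // -srs; apply: coef_bound => //; rewrite srs; case/andP: hn => _; exact: ltnW.
have Hs : sqnorm w = \sum_(1 <= n < N) f n by rewrite sqnorm_sum.
have Hb : \sum_(1 <= n < N) g n = ('C(N.*2, N))%:R - 2 by rewrite binom_sq_sum.
split; first by rewrite Hs -Hb; apply: ler_sum_nat.
split.
- move=> heq.
  have E0 : \sum_(1 <= n < N) (g n - f n) = 0 by rewrite sumrB -Hs Hb heq subrr.
  move: E0 => /eqP; rewrite big_seq psumr_eq0; last first.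
    by move=> n; rewrite mem_index_iota => hn; rewrite subr_ge0 Hfg.
  move=> /allP /(_ 1%N); rewrite mem_index_iota hN /= => /(_ isT).
  rewrite subr_eq0 => /eqP hg1.
  have hc1 : `|ccoef w 1| = N%:R.
    have : `|ccoef w 1| ^+ 2 = (N%:R) ^+ 2 by rewrite -Hf -hg1 Hg bin1.
    by move/eqP; rewrite eqrXn2 ?normr_ge0 ?ler0n // => /eqP.
  have s0 : size rs != 0%N by rewrite srs -lt0n.
  have hS : `|\sum_(z <- rs) z| = (size rs)%:R.
    rewrite -normrN -coefPn_prod_XsubC // -subn1 -Hc ?srs //.
  have hall := @all_eq_of_sum R rs hr ltac:(by rewrite srs) hS.
  move: hall; set u := _ / _ => hall.
  have hp : apoly w = ('X + (-u)%:P) ^+ N.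
    rewrite hrs (eq_big_seq (fun _ => 'X - u%:P)); last by move=> z hz; rewrite (hall z hz).
    by rewrite prod_const_seq srs polyCN.
  exists (-u); split => //.
  have := congr1 (fun q => q.[0]) hp.
  rewrite /= horner_exp horner_coef0 apoly_coef0 // polyCN hornerXsubC sub0r.
  by move=> <-.
- move=> [ze [hz hp]].
  have hze : `|ze| = 1.
    have : `|ze| ^+ N == 1 by rewrite -normrX hz normr1.
    by rewrite pexpr_eq1 // => /eqP.
  have hall : forall z, z \in rs -> z = - ze.
    move=> z hzr; have : root (apoly w) z by rewrite hrs root_prod_XsubC.
    rewrite hp /root horner_exp -[ze]opprK polyCN hornerXsubC expf_eq0 subr_eq0.
    by case/andP=> _ /eqP ->; rewrite opprK.
  have Hcn : forall n, (1 <= n < N)%N -> `|ccoef w n| = ('C(N, n))%:R.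
    move=> n hn; rewrite Hc // -srs (@coef_const R rs (- ze) n hall); last by rewrite srs; case/andP: hn => _; exact: ltnW.
    by rewrite normrM normrX normrN1 expr1n mul1r normrMn normrX normrN hze expr1n srs.
  have Hfg' : forall n, (1 <= n < N)%N -> f n = g n.
    move=> n hn; have := Hf n; rewrite Hcn // -Hg.
    by case.
  by rewrite Hs -Hb; apply: eq_big_nat.
Qed.
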